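(* Let $1\le k\le n$ and $\rho=\sum_{i=0}^k\lambda_i|D_n^i\rangle\langle D_n^i|$ with $\lambda_i\ge0$, $\sum_{i=0}^k\lambda_i=1$; set $\lambda_i=0$ for $k<i\le n$. Then $L(\rho)\le k$ if and only if the only solution $(a_0,\dots,a_n)$ with all $a_i\ge0$ of the linear system $$\sum_{i=0}^n a_{i}\frac{\binom{k}{s}\binom{n-k}{i-s}}{\binom{n}{i}}=\sum_{i=0}^k\lambda_i\frac{\binom{k}{s}\binom{n-k}{i-s}}{\binom{n}{i}},\qquad 0\le s\le k,$$ is $(a_0,\dots,a_n)=(\lambda_0,\dots,\lambda_k,0,\dots,0)$.
   Context: Convention: $\binom{m}{i}=0$ if $i<0$ or $i>m$. Dicke states: $|D_n^i\rangle=\binom{n}{i}^{-1/2}\sum_{s\in\{0,1\}^n,\ \sum_js_j=i}|s_1\rangle\otimes\cdots\otimes|s_n\rangle$. For $S\subseteq[n]$, $\rho_S$ is the partial trace of $\rho$ over qubits outside $S$; $\mathcal C(\rho,\mathcal S)=\{\sigma\text{ density matrix}:\sigma_S=\rho_S\ \forall S\in\mathcal S\}$; $\mathcal S$ determines $\rho$ if $\mathcal C(\rho,\mathcal S)=\{\rho\}$; $L(\rho)=\min_{\mathcal S\text{ determines }\rho}\max_{S\in\mathcal S}|S|$. *)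

(* Defs.v *)
From HB Require Import structures.
From mathcomp Require Import all_boot all_order all_algebra.
From mathcomp Require Import boolp reals.
From mathcomp Require Import complex.
Set Implicit Arguments. Unset Strict Implicit. Unset Printing Implicit Defensive.
Import Order.TTheory GRing.Theory Num.Theory.
Local Open Scope ring_scope.

(* Computational basis states of n qubits: bit strings s = (s_1,...,s_n). *)
Definition bits (n : nat) := {ffun 'I_n -> bool}.

Definition weight n (x : bits n) : nat := (\sum_(j < n) (x j : nat))%N.

(* Operators on (C^2)^{\otimes n}, given by their matrix entries <x|A|y>
   in the computational basis, with C = R[i]. *)
Definition op (R : rcfType) (n : nat) := bits n -> bits n -> R[i].

Definition is_density (R : rcfType) n (s : op R n) : Prop :=
  [/\ (forall x y, s x y = (s y x)^*),
      (forall v : bits n -> R[i], 0 <= \sum_x \sum_y (v x)^* * s x y * v y)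
    & \sum_x s x x = 1].

Definition glue n (S : {set 'I_n}) (x z : bits n) : bits n :=
  [ffun j => if j \in S then x j else z j].

(* The reduced operator rho_S is
   represented by its entries <x_S|rho_S|y_S>, indexed by full strings x, y
   of which only the coordinates in S matter:
     <x_S|rho_S|y_S> = sum_{z in {0,1}^{[n]\S}} <x_S z|rho|y_S z>.
   (z ranges over strings vanishing on S, i.e. over assignments of [n]\S.) *)
Definition ptrace (R : rcfType) n (rho : op R n) (S : {set 'I_n}) : op R n :=
  fun x y => \sum_(z : bits n | [forall j in S, ~~ z j]) rho (glue S x z) (glue S y z).

Definition compatible (R : rcfType) n (rho sigma : op R n) (F : {set {set 'I_n}}) : Prop :=
  is_density sigma /\ (forall S, S \in F -> forall x y, ptrace sigma S x y = ptrace rho S x y).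

Definition determines (R : rcfType) n (rho : op R n) (F : {set {set 'I_n}}) : Prop :=
  compatible rho rho F /\
  (forall sigma, compatible rho sigma F -> forall x y, sigma x y = rho x y).

(* L(rho) = min over determining families F of max_{S in F} |S|
   (the default value n of the min is never used when rho is a density matrix,
   since F = {[n]} determines rho). *)
Definition Lnum (R : rcfType) n (rho : op R n) : nat :=
  \big[minn/n]_(F : {set {set 'I_n}} | `[< determines rho F >]) \max_(S in F) #|S|.

Definition dicke (R : rcfType) n (l : nat) : bits n -> R[i] :=
  fun x => if weight x == l then (((Num.sqrt ('C(n, l)%:R : R))^-1)%:C)%C else 0.

Definition dicke_mix (R : rcfType) n k (lam : nat -> R) : op R n :=
  fun x y => \sum_(l < k.+1) ((lam l)%:C)%C * @dicke R n l x * (@dicke R n l y)^*.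

Definition binz (m : nat) (j : int) : nat :=
  match j with Posz j' => 'C(m, j') | Negz _ => 0%N end.

Definition coef (R : rcfType) n k s l : R :=
  ('C(k, s) * binz (n - k) (l%:Z - s%:Z))%:R / ('C(n, l))%:R.

(* Main.v *)
Require Import Defs.
From HB Require Import structures.
From mathcomp Require Import all_boot all_order all_algebra.
From mathcomp Require Import boolp reals.
From mathcomp Require Import complex.
From mathcomp Require Import zify ring perm.
Import Order.TTheory GRing.Theory Num.Theory.
Local Open Scope ring_scope.
Set Implicit Arguments. Unset Strict Implicit. Unset Printing Implicit Defensive.


Section Comb.
Variable n : nat.

Lemma weight_card (z : bits n) : weight z = #|[set j | z j]|.
Proof.
rewrite /weight -sum1_card [RHS]big_mkcond /=; apply: eq_bigr => j _.
by rewrite inE; case: (z j).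
Qed.

Lemma weight_le (z : bits n) : (weight z <= n)%N.
Proof. by rewrite weight_card -[X in (_ <= X)%N]card_ord max_card. Qed.

Definition wS (S : {set 'I_n}) (x : bits n) := (\sum_(j in S) (x j : nat))%N.

Lemma weight_glue (S : {set 'I_n}) (x z : bits n) :
  [forall j in S, ~~ z j] -> weight (glue S x z) = (wS S x + weight z)%N.
Proof.
move=> /forall_inP zS.
rewrite /weight (bigID (fun j => j \in S)) /= [in RHS](bigID (fun j => j \in S)) /=.
rewrite [X in (_ + (X + _))%N]big1 ?add0n; last by move=> j /zS /negbTE ->.
rewrite /wS; congr (_ + _)%N; apply: eq_bigr => j; rewrite ffunE.
  by move=> ->.
by move=> /negbTE ->.
Qed.

Lemma count_bits (S : {set 'I_n}) (t : nat) :
  #|[set z : bits n | [forall j in S, ~~ z j] & weight z == t]| = 'C(n - #|S|, t).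
Proof.
set D := [set z : bits n | _ & _].
have inj : injective (fun z : bits n => [set j | z j]).
  move=> z1 z2 /setP h; apply/ffunP => j; move: (h j); by rewrite !inE.
rewrite -(card_imset D inj).
have -> : [set [set j | z j] | z : bits n in D] = [set A : {set 'I_n} | A \subset ~: S & #|A| == t].
  apply/setP => A; rewrite inE; apply/imsetP/andP.
    case=> z; rewrite inE => /andP [/forall_inP zS /eqP wz] ->; split.
      by apply/subsetP => j; rewrite !inE; apply: contraL => /zS.
    by rewrite -weight_card wz.
  case=> /subsetP sA /eqP cA; exists [ffun j => j \in A].
    rewrite inE; apply/andP; split.
      by apply/forall_inP => j jS; rewrite ffunE; apply/negP => /sA; rewrite inE jS.
    rewrite weight_card -cA; apply/eqP; apply: eq_card => j; by rewrite !inE ffunE.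
  by apply/setP => j; rewrite !inE ffunE.
by rewrite cards_draws cardsCs card_ord setCK.
Qed.


Definition Bn (j s l : nat) : nat := if (s <= l)%N then 'C(j, l - s) else 0%N.

Lemma Bn_pascal j s l : Bn j.+1 s l = (Bn j s l + Bn j s.+1 l)%N.
Proof.
rewrite /Bn; case: (ltngtP s l) => h /=.
- have -> : (l - s = (l - s.+1).+1)%N by lia.
  by rewrite binS addnC.
- by [].
- by rewrite h subnn !bin0.
Qed.

Lemma binz_Bn j s l : binz j (l%:Z - s%:Z) = Bn j s l.
Proof.
rewrite /Bn; case: leqP => h.
  by rewrite subzn.
rewrite /binz; case E: (l%:Z - s%:Z)%R => [m|m] //.
have : (l%:Z - s%:Z < 0)%R by rewrite subr_lt0 ltz_nat.
by rewrite E.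
Qed.

Lemma wS_le (S : {set 'I_n}) x : (wS S x <= #|S|)%N.
Proof.
rewrite /wS -sum1_card; apply: leq_sum => j _; by case: (x j).
Qed.

Variable R : rcfType.

Lemma sum_glue (S : {set 'I_n}) (x : bits n) (G : nat -> R[i]) :
  \sum_(z : bits n | [forall j in S, ~~ z j]) G (wS S x + weight z)%N =
  \sum_(l < n.+1) (Bn (n - #|S|) (wS S x) l)%:R * G l.
Proof.
set P := fun z : bits n => [forall j in S, ~~ z j].
have hle : forall z, P z -> (wS S x + weight z < n.+1)%N.
  by move=> z Pz; rewrite ltnS -weight_glue //; exact: weight_le.
rewrite (partition_big (fun z => inord (wS S x + weight z) : 'I_n.+1) xpredT) //=.
apply: eq_bigr => l _.
have -> : \sum_(z | P z && (inord (wS S x + weight z) == l)) G (wS S x + weight z)%N =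
          \sum_(z in [pred z : bits n | P z && (wS S x + weight z == l)%N]) G l.
  apply: eq_big => z; rewrite ?inE /=.
    case Pz: (P z) => //=; apply/idP/idP => /eqP h; apply/eqP.
      by rewrite -h inordK //; apply: hle; rewrite Pz.
    by apply: val_inj; rewrite /= inordK ?h //; apply: hle; rewrite Pz.
  by move=> /andP [Pz /eqP <-]; rewrite inordK //; apply: hle.
rewrite sumr_const mulr_natl; congr (_ *+ _).
rewrite /Bn; case: leqP => h.
  rewrite -(count_bits S (l - wS S x)); apply: eq_card => z; rewrite !inE /=.
  rewrite /P; case: [forall j in S, ~~ z j] => //=.
  by apply/idP/idP => /eqP h1; apply/eqP; lia.
apply: eq_card0 => z; rewrite !inE /=; apply/negP => /andP [_ /eqP]; lia.
Qed.

End Comb.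
Section Sesq.
Variables (R : rcfType) (n : nat).
Local Notation C := R[i].

Definition q (A : op R n) (v w : bits n -> C) : C :=
  \sum_x \sum_y (v x)^* * A x y * w y.

Lemma qDl A v1 v2 w : q A (fun x => v1 x + v2 x) w = q A v1 w + q A v2 w.
Proof.
rewrite /q -big_split; apply: eq_bigr => x _; rewrite -big_split; apply: eq_bigr => y _.
by rewrite rmorphD /= !mulrDl.
Qed.

Lemma qDr A v w1 w2 : q A v (fun y => w1 y + w2 y) = q A v w1 + q A v w2.
Proof.
rewrite /q -big_split; apply: eq_bigr => x _; rewrite -big_split; apply: eq_bigr => y _.
by rewrite mulrDr.
Qed.

Lemma qZl A a v w : q A (fun x => a * v x) w = a^* * q A v w.
Proof.
rewrite /q mulr_sumr; apply: eq_bigr => x _; rewrite mulr_sumr; apply: eq_bigr => y _.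
by rewrite rmorphM /= !mulrA.
Qed.

Lemma qZr A a v w : q A v (fun y => a * w y) = a * q A v w.
Proof.
rewrite /q mulr_sumr; apply: eq_bigr => x _; rewrite mulr_sumr; apply: eq_bigr => y _.
by rewrite mulrCA.
Qed.

Definition herm (A : op R n) := forall x y, A x y = (A y x)^*.

Lemma q_herm A v w : herm A -> q A v w = (q A w v)^*.
Proof.
move=> hA; rewrite /q rmorph_sum /= exchange_big; apply: eq_bigr => x _.
rewrite rmorph_sum; apply: eq_bigr => y _ /=.
by rewrite !rmorphM /= conjCK -hA [RHS]mulrC [w x * _]mulrC mulrA.
Qed.

Lemma kernel (A : op R n) (v : bits n -> C) :
  herm A -> (forall u, 0 <= q A u u) -> q A v v = 0 ->
  forall y, \sum_x A y x * v x = 0.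
Proof.
move=> hA hpos hv y.
set w : bits n -> C := fun x => (x == y)%:R.
have hc : q A w v = \sum_x A y x * v x.
  rewrite /q (bigD1 y) //= [X in _ + X]big1 ?addr0.
    by apply: eq_bigr => z _; rewrite /w eqxx rmorph1 mul1r.
  by move=> x /negbTE; rewrite /w => ->; rewrite rmorph0 big1 // => z _; rewrite !mul0r.
rewrite -hc; set c := q A w v; set b := q A w w.
have b0 : 0 <= b by apply: hpos.
set t : C := (b + 1)^-1.
have b1 : 0 < b + 1 by rewrite ltr_wpDl.
have t0 : 0 < t by rewrite invr_gt0.
have tb : t * b < 1 by rewrite mulrC ltr_pdivrMr // mul1r ltrDl ltr01.
have := hpos (fun x => v x + (- t * c) * w x).
rewrite qDl qDr qDr qZl qZr qZl qZr hv (q_herm v w hA) -/c -/b.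
have -> : 0 + (- t * c) * c^* + ((- t * c)^* * c + (- t * c)^* * ((- t * c) * b))
  = (c * c^*) * (t * (t * b - 2)).
  have tr : t^* = t by apply/CrealP; rewrite realE (ltW t0).
  rewrite rmorphM rmorphN /= tr; ring.
have hneg : t * (t * b - 2) < 0.
  rewrite pmulr_rlt0 // subr_lt0; apply: (lt_trans tb); by rewrite ltr1n.
rewrite mulrC (nmulr_rge0 _ hneg) => hle.
apply/eqP; rewrite -mul_conjC_eq0 eq_le hle mul_conjC_ge0 //.
Qed.

End Sesq.

Section Dicke.
Variables (R : rcfType) (n : nat).
Local Notation C := R[i].

Lemma realC_conj (a : R) : ((a%:C)%C)^* = (a%:C)%C.
Proof. apply: conj_Creal; apply/complex_realP; by exists a. Qed.

Lemma sum_ord_pick (N w : nat) (F : nat -> C) :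
  \sum_(l < N) (if (l : nat) == w then F l else 0) = if (w < N)%N then F w else 0.
Proof.
case: (ltnP w N) => h.
  rewrite (bigD1 (Ordinal h)) //= eqxx big1 ?addr0 // => l hl.
  case: eqP => // e; move: hl; have -> : l = Ordinal h by apply: val_inj.
  by rewrite eqxx.
by rewrite big1 // => l _; case: eqP => // e; move: (ltn_ord l); rewrite e ltnNge h.
Qed.

Lemma mix_entry K (c : nat -> R) (x y : bits n) :
  @dicke_mix R n K c x y =
  if (weight x == weight y) && (weight x < K.+1)%N
  then ((c (weight x) * ('C(n, weight x)%:R)^-1)%:C)%C else 0.
Proof.
rewrite /dicke_mix.
transitivity (\sum_(l < K.+1) (if (l : nat) == weight x then
   (if weight y == weight x then ((c l * ('C(n, l)%:R)^-1)%:C)%C else 0) else 0)).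
  apply: eq_bigr => l _; rewrite /dicke.
  case: (eqVneq (weight x) l) => [<-|ne].
    case: ifP => _; last by rewrite rmorph0 mulr0.
    rewrite realC_conj -!rmorphM /=; congr ((_)%:C)%C.
    rewrite -mulrA; congr (_ * _); rewrite -invfM -expr2 sqr_sqrtr //.
  by rewrite mulr0 mul0r.
rewrite (sum_ord_pick K.+1 (weight x) (fun l => if weight y == weight x then ((c l * ('C(n, l)%:R)^-1)%:C)%C else 0)).
case: (eqVneq (weight x) (weight y)) => [->|ne] /=.
  by [].
by case: ifP.
Qed.

Lemma dicke_density K (c : nat -> R) :
  (K <= n)%N -> (forall l, (l <= K)%N -> 0 <= c l) -> \sum_(l < K.+1) c l = 1 ->
  is_density (@dicke_mix R n K c).
Proof.
move=> Kn c0 c1; split.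
- move=> x y; rewrite !mix_entry; case: (eqVneq (weight x) (weight y)) => [e|ne] /=.
    by rewrite e; case: ifP => _; rewrite ?realC_conj ?rmorph0.
  by rewrite ?rmorph0.
- move=> v; rewrite /dicke_mix.
  set W := fun l : nat => \sum_y (@dicke R n l y)^* * v y.
  under eq_bigr => x _ do under eq_bigr => y _ do rewrite mulr_sumr mulr_suml.
  under eq_bigr => x _ do rewrite exchange_big.
  rewrite exchange_big /=.
  apply: sumr_ge0 => l _.
  rewrite [X in 0 <= X](_ : _ = ((c l)%:C)%C * ((W l)^* * W l)).
    apply: mulr_ge0.
      by rewrite ler0c; apply: c0; rewrite -ltnS.
    by rewrite mulrC mul_conjC_ge0.
  rewrite /W /= rmorph_sum /= mulr_suml mulr_sumr; apply: eq_bigr => x _.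
  rewrite mulr_sumr mulr_sumr; apply: eq_bigr => y _.
  rewrite rmorphM /= conjCK; ring.
- under eq_bigr => x _ do rewrite mix_entry eqxx /=.
  pose G := fun w : nat => if (w < K.+1)%N then ((c w * ('C(n, w)%:R)^-1)%:C)%C else (0 : C).
  have x0 : bits n := [ffun => false].
  have := sum_glue set0 x0 G.
  have -> : wS set0 x0 = 0%N by rewrite /wS big_set0.
  rewrite cards0 subn0 /=.
  have -> : \sum_(z : bits n | [forall j in set0, ~~ z j]) G (0 + weight z)%N = \sum_(x : bits n) G (weight x).
    by apply: eq_bigl => z; apply/forall_inP => j; rewrite inE.
  rewrite /G => ->.
  transitivity (\sum_(l < n.+1) if (l < K.+1)%N then ((c l)%:C)%C else 0).
    apply: eq_bigr => l _; rewrite /Bn leq0n subn0; case: ifP => _; last by rewrite mulr0.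
    rewrite rmorphM fmorphV /= rmorph_nat mulrCA divff ?mulr1 //.
    by rewrite pnatr_eq0 -lt0n bin_gt0 -ltnS.
  rewrite -big_mkcond /= -(big_ord_widen n.+1 (fun l => ((c l)%:C)%C)) //.
  by rewrite -rmorph_sum /= c1.
Qed.

End Dicke.

Section Fwd.
Variables (R : rcfType) (n : nat).
Local Notation C := R[i].

Lemma ptrace_mix K (c : nat -> R) (S : {set 'I_n}) (x y : bits n) :
  ptrace (@dicke_mix R n K c) S x y =
  if wS S x == wS S y then
    \sum_(l < n.+1) (Bn (n - #|S|) (wS S x) l)%:R *
       (if (l < K.+1)%N then ((c l * ('C(n, l)%:R)^-1)%:C)%C else 0)
  else 0.
Proof.
rewrite /ptrace.
under eq_bigr => z zS do rewrite mix_entry !weight_glue //.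
case: eqVneq => [e|ne].
  rewrite -e; under eq_bigr => z _ do rewrite eqxx /=.
  exact: (sum_glue S x (fun w => if (w < K.+1)%N then ((c w * ('C(n, w)%:R)^-1)%:C)%C else 0)).
by apply: big1 => z _; rewrite eqn_add2r (negbTE ne).
Qed.

Definition Hs (b : nat -> R) j s := \sum_(l < n.+1) (Bn j s l)%:R * b l.

Lemma Hs_pascal b j s : Hs b j.+1 s = Hs b j s + Hs b j s.+1.
Proof.
rewrite /Hs -big_split; apply: eq_bigr => l _; by rewrite Bn_pascal natrD mulrDl.
Qed.

Lemma Hs_down b k : (k <= n)%N -> (forall s, (s <= k)%N -> Hs b (n - k) s = 0) ->
  forall m, (m <= k)%N -> forall s, (s <= m)%N -> Hs b (n - m) s = 0.
Proof.
move=> kn h m mk.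
have : (k - m + m = k)%N by lia.
move: (k - m)%N => d; elim: d m mk => [|d IH] m mk e s sm.
  have -> : m = k by lia.
  by apply: h; lia.
have -> : (n - m = (n - m.+1).+1)%N by lia.
rewrite Hs_pascal !IH //; try lia; by rewrite addr0.
Qed.

Definition bdiff (a lam : nat -> R) k l : R :=
  (a l - (if (l <= k)%N then lam l else 0)) * ('C(n, l)%:R)^-1.

Lemma sys_Hs k (a lam : nat -> R) : (k <= n)%N ->
  (forall s, (s <= k)%N ->
     \sum_(l < n.+1) a l * coef R n k s l = \sum_(l < k.+1) lam l * coef R n k s l) ->
  forall s, (s <= k)%N -> Hs (bdiff a lam k) (n - k) s = 0.
Proof.
move=> kn hs s sk; have e := hs s sk.
rewrite (big_ord_widen n.+1 (fun l => lam l * coef R n k s l)) // [RHS]big_mkcond /= in e.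
move/eqP: e; rewrite -subr_eq0 -sumrB => /eqP e.
have Cs : ('C(k, s)%:R : R) != 0 by rewrite pnatr_eq0 -lt0n bin_gt0.
apply: (mulfI Cs); rewrite mulr0 -[RHS]e /Hs mulr_sumr; apply: eq_bigr => l _.
rewrite /coef /bdiff binz_Bn ltnS; case: ifP => _; rewrite ?mul0r ?subr0 natrM; ring.
Qed.


Definition cs (l : nat) : bits n := [ffun j : 'I_n => (j < l)%N].

Lemma weight_cs l : (l <= n)%N -> weight (cs l) = l.
Proof.
move=> ln; rewrite /weight; under eq_bigr do rewrite ffunE.
rewrite -(big_mkord xpredT (fun j => nat_of_bool (j < l)%N)).
rewrite (@big_cat_nat _ _ _ l) //=.
rewrite [X in (_ + X)%N]big1_seq ?addn0; last first.
  by move=> i; rewrite mem_index_iota => /and3P [_ h _]; rewrite ltnNge h.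
rewrite (eq_big_nat _ _ (F2 := fun _ => 1%N)); last by move=> i /andP [_ ->].
by rewrite sum_nat_const_nat muln1 subn0.
Qed.

Lemma realC_inj (a b : R) : ((a%:C)%C : C) = (b%:C)%C -> a = b.
Proof. by move=> h; have := congr1 (@complex.Re R) h. Qed.

Lemma forward_core k (lam a : nat -> R) (F : {set {set 'I_n}}) :
  (k <= n)%N -> (forall l, (l <= k)%N -> 0 <= lam l) -> \sum_(l < k.+1) lam l = 1 ->
  determines (@dicke_mix R n k lam) F -> (forall S, S \in F -> (#|S| <= k)%N) ->
  (forall l, (l <= n)%N -> 0 <= a l) ->
  (forall s, (s <= k)%N ->
     \sum_(l < n.+1) a l * coef R n k s l = \sum_(l < k.+1) lam l * coef R n k s l) ->
  forall l, (l <= n)%N -> a l = (if (l <= k)%N then lam l else 0).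
Proof.
move=> kn lam0 lam1 [_ det] FS a0 hsys.
have hH := Hs_down kn (sys_Hs kn hsys).
have Cn l : (l <= n)%N -> ('C(n, l)%:R : R) != 0.
  by move=> ln; rewrite pnatr_eq0 -lt0n bin_gt0.
have a1 : \sum_(l < n.+1) a l = 1.
  have := hH 0%N (leq0n _) 0%N (leq0n _); rewrite subn0 /Hs /bdiff.
  have e1 : forall l : 'I_n.+1, (Bn n 0 l)%:R *
      ((a l - (if (l <= k)%N then lam l else 0)) / ('C(n, l)%:R)) =
      a l - (if (l <= k)%N then lam l else 0).
    move=> l; rewrite /Bn leq0n subn0 mulrCA divff ?mulr1 //; apply: Cn.
    by rewrite -ltnS.
  under eq_bigr => l _ do rewrite e1.
  rewrite sumrB => /eqP; rewrite subr_eq0 => /eqP ->.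
  rewrite -lam1 (big_ord_widen n.+1 lam) // [RHS]big_mkcond /=.
  by apply: eq_bigr => l _; rewrite ltnS.
have dens := dicke_density (leqnn n) a0 a1.
have compat : compatible (@dicke_mix R n k lam) (@dicke_mix R n n a) F.
  split => // S SF x y; rewrite !ptrace_mix; case: ifP => // _.
  apply/eqP; rewrite -subr_eq0 -sumrB; apply/eqP.
  have h := hH #|S| (FS S SF) (wS S x) (wS_le S x).
  transitivity ((Hs (bdiff a lam k) (n - #|S|) (wS S x))%:C)%C; last by rewrite h rmorph0.
  rewrite /Hs rmorph_sum; apply: eq_bigr => l _ /=.
  rewrite ltn_ord -mulrBr [RHS]rmorphM rmorph_nat; congr (_ * _).
  rewrite /bdiff ltnS; case: ifP => _.
    by rewrite -rmorphB mulrBl.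
  by rewrite !subr0.
move=> l ln; have := det _ compat (cs l) (cs l).
rewrite !mix_entry weight_cs // eqxx /= ltnS ln ltnS.
case: ifP => _ /(congr1 (@complex.Re R)) /= h.
  by apply: (mulIf (invr_neq0 (Cn l ln))).
by apply: (mulIf (invr_neq0 (Cn l ln))); rewrite mul0r.
Qed.

End Fwd.


Section Swap.
Variable n : nat.

Definition sw (i j : 'I_n) (u : bits n) : bits n := [ffun m => u (tperm i j m)].

Lemma weight_sw i j (u : bits n) : weight (sw i j u) = weight u.
Proof.
rewrite /weight (reindex_inj (@perm_inj _ (tperm i j))) /=.
by apply: eq_bigr => m _; rewrite ffunE tpermK.
Qed.

Lemma swK i j : involutive (sw i j).
Proof. by move=> u; apply/ffunP => m; rewrite !ffunE tpermK. Qed.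

Lemma sw_id i j (u : bits n) : u i = u j -> sw i j u = u.
Proof.
move=> e; apply/ffunP => m; rewrite ffunE; case: (tpermP i j m) => [->|->|] //.
Qed.

Lemma glue_sw (S : {set 'I_n}) i j (x z : bits n) : i \in S -> j \in S ->
  glue S (sw i j x) z = sw i j (glue S x z).
Proof.
move=> iS jS; apply/ffunP => m; rewrite !ffunE.
case: (tpermP i j m) => [->|->|/eqP ni /eqP nj]; rewrite ?iS ?jS //.
Qed.

Definition Dh (u u' : bits n) := (\sum_m (u m && ~~ u' m))%N.

Lemma Dh_sym (u u' : bits n) : weight u = weight u' -> Dh u u' = Dh u' u.
Proof.
move=> e.
have h : forall m, (u m + (u' m && ~~ u m) = u' m + (u m && ~~ u' m))%N.
  by move=> m; case: (u m); case: (u' m).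
have := congr1 (fun f => \sum_m f m)%N (funext h) => /=.
rewrite !big_split /= -/(weight u) -/(weight u') e => /eqP.
by rewrite eqn_add2l => /eqP.
Qed.

Lemma sw_invariant (T : Type) (f : bits n -> T) :
  (forall i j u, f (sw i j u) = f u) ->
  forall u u', weight u = weight u' -> f u = f u'.
Proof.
move=> hf u u' e.
have : (Dh u u' <= Dh u u')%N by [].
move: {-1}(Dh u u') => d; elim: d u e => [|d IH] u e hd.
  have h0 : Dh u u' = 0%N by lia.
  have h1 : Dh u' u = 0%N by rewrite -Dh_sym.
  have -> : u = u'; last by [].
  apply/ffunP => m.
  move/eqP: h0; rewrite sum_nat_eq0 => /forallP /(_ m) /eqP.
  move/eqP: h1; rewrite sum_nat_eq0 => /forallP /(_ m) /eqP.
  by case: (u m); case: (u' m).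
case: (posnP (Dh u u')) => [h0|hpos].
  apply: IH => //; lia.
have [i ui] : exists i, u i && ~~ u' i.
  apply/existsP; move: hpos; rewrite lt0n sum_nat_eq0; apply: contraR.
  by rewrite negb_exists => /forallP h; apply/forallP => m; move: (h m); case: (_ && _).
have [j uj] : exists j, u' j && ~~ u j.
  apply/existsP; move: hpos; rewrite (Dh_sym e) lt0n sum_nat_eq0; apply: contraR.
  by rewrite negb_exists => /forallP h; apply/forallP => m; move: (h m); case: (_ && _).
move/andP: ui => [ui ui']; move/andP: uj => [uj uj'].
rewrite -(hf i j u); apply: IH; first by rewrite weight_sw.
suff : (Dh (sw i j u) u' < Dh u u')%N by lia.
rewrite /Dh (bigD1 i) //= [X in (_ < X)%N](bigD1 i) //= ui (negbTE ui') /=.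
rewrite ffunE tpermL (negbTE uj') /= add0n ltnS.
apply: leq_sum => m mi; rewrite ffunE.
case: (tpermP i j m) => [e1|->|_ _].
- by move: mi; rewrite e1 eqxx.
- by rewrite ui uj.
- by [].
Qed.

End Swap.


Section Bwd.
Variables (R : rcfType) (n : nat).
Local Notation C := R[i].

Definition delta (a : bits n) : bits n -> C := fun x => (x == a)%:R.

Lemma sum_delta (F : bits n -> C) a : \sum_x F x * delta a x = F a.
Proof.
rewrite (bigD1 a) //= /delta eqxx mulr1 big1 ?addr0 // => x /negbTE ->.
by rewrite mulr0.
Qed.

Lemma q_deltas (A : op R n) a b : q A (delta a) (delta b) = A a b.
Proof.
rewrite /q; under eq_bigr => x _ do rewrite (sum_delta (fun y => (delta a x)^* * A x y)).
under eq_bigr => x _ do rewrite mulrC /delta conjC_nat -/(delta a x).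
exact: (sum_delta (fun x => A x b)).
Qed.

Definition dv (a b : bits n) : bits n -> C := fun x => delta a x + (-1) * delta b x.

Lemma q_dv (A : op R n) a b : q A (dv a b) (dv a b) = A a a - A a b - A b a + A b b.
Proof.
rewrite /dv !qDl !qDr !qZl !qZr !q_deltas rmorphN rmorph1; ring.
Qed.

Lemma sum_dv (A : op R n) y a b : \sum_x A y x * dv a b x = A y a - A y b.
Proof.
rewrite /dv; under eq_bigr => x _ do rewrite mulrDr mulrCA.
rewrite big_split /= -mulr_sumr !(sum_delta (fun x => A y x)); ring.
Qed.

Definition Inv (A : op R n) := forall u u' v v', weight u = weight u' -> weight v = weight v' -> A u v = A u' v'.

Lemma Inv_mix K c : Inv (@dicke_mix R n K c).
Proof. by move=> u u' v v' e1 e2; rewrite !mix_entry e1 e2. Qed.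

Definition Sk k := [set j : 'I_n | (j < k)%N].

Lemma wS_out (S : {set 'I_n}) (x : bits n) : (forall j, j \notin S -> ~~ x j) -> wS S x = weight x.
Proof.
move=> h; rewrite /weight (bigID (fun j => j \in S)) /= [X in (_ + X)%N]big1 ?addn0 //.
by move=> j /h /negbTE ->.
Qed.

Lemma cs_out k l : (l <= k)%N -> forall j, j \notin Sk k -> ~~ cs n l j.
Proof. move=> lk j; rewrite inE ffunE -!leqNgt => h; exact: leq_trans lk h. Qed.

Lemma card_Sk k : (k <= n)%N -> #|Sk k| = k.
Proof.
move=> kn; rewrite -{2}(weight_cs kn) weight_card; apply: eq_card => j.
by rewrite !inE ffunE.
Qed.

Lemma ptrace_Inv (A : op R n) k l l' : Inv A -> (l <= k)%N -> (l' <= k)%N -> (k <= n)%N ->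
  ptrace A (Sk k) (cs n l) (cs n l') =
  \sum_(z : bits n | [forall j in Sk k, ~~ z j]) A (cs n (l + weight z)) (cs n (l' + weight z)).
Proof.
move=> hA lk l'k kn; apply: eq_bigr => z zS.
have w1 := weight_glue (cs n l) zS; have w2 := weight_glue (cs n l') zS.
rewrite !wS_out in w1 w2; try exact: cs_out.
rewrite !weight_cs // in w1 w2; try lia.
have b1 := weight_le (glue (Sk k) (cs n l) z); have b2 := weight_le (glue (Sk k) (cs n l') z).
rewrite w1 in b1; rewrite w2 in b2.
by apply: hA; rewrite ?w1 ?w2 weight_cs.
Qed.

Lemma zero_weight (z : bits n) : weight z = 0%N -> z = [ffun => false].
Proof.
move=> /eqP; rewrite /weight sum_nat_eq0 => /forallP h.
by apply/ffunP => j; rewrite ffunE; move: (h j); case: (z j).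
Qed.

Lemma tri (A B : op R n) k : (k <= n)%N -> Inv A -> Inv B ->
  (forall u v, (k < weight u)%N || (k < weight v)%N -> A u v = 0) ->
  (forall u v, (k < weight u)%N || (k < weight v)%N -> B u v = 0) ->
  (forall x y, ptrace A (Sk k) x y = ptrace B (Sk k) x y) ->
  forall u v, A u v = B u v.
Proof.
move=> kn hA hB vA vB hp.
have step : forall l l', (l <= k)%N -> (l' <= k)%N ->
    (forall w, (1 <= w)%N -> (l + w <= k)%N -> (l' + w <= k)%N ->
       A (cs n (l + w)) (cs n (l' + w)) = B (cs n (l + w)) (cs n (l' + w))) ->
    A (cs n l) (cs n l') = B (cs n l) (cs n l').
  move=> l l' lk l'k h.
  have := hp (cs n l) (cs n l'); rewrite !ptrace_Inv //.
  have z0S : [forall j in Sk k, ~~ ([ffun => false] : bits n) j].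
    by apply/forall_inP => j _; rewrite ffunE.
  rewrite (bigD1 _ z0S) /= [in RHS](bigD1 _ z0S) /=.
  have w0 : weight ([ffun => false] : bits n) = 0%N.
    by rewrite /weight big1 // => j _; rewrite ffunE.
  rewrite w0 !addn0.
  suff -> : \sum_(z : bits n | [forall j in Sk k, ~~ z j] && (z != [ffun=> false]))
      A (cs n (l + weight z)) (cs n (l' + weight z)) =
    \sum_(z : bits n | [forall j in Sk k, ~~ z j] && (z != [ffun=> false]))
      B (cs n (l + weight z)) (cs n (l' + weight z)).
    by move/addIr.
  apply: eq_bigr => z /andP [zS nz].
  have wz : (1 <= weight z)%N.
    by rewrite lt0n; apply: contra nz => /eqP /zero_weight ->.
  have b1 : (l + weight z <= n)%N.
    have := weight_le (glue (Sk k) (cs n l) z); rewrite weight_glue // wS_out; last exact: cs_out.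
    rewrite weight_cs //; lia.
  have b2 : (l' + weight z <= n)%N.
    have := weight_le (glue (Sk k) (cs n l') z); rewrite weight_glue // wS_out; last exact: cs_out.
    rewrite weight_cs //; lia.
  case: (leqP (l + weight z) k) => h1; case: (leqP (l' + weight z) k) => h2.
  - exact: h.
  - by rewrite vA ?vB // !weight_cs // h2 orbT.
  - by rewrite vA ?vB // !weight_cs // h1.
  - by rewrite vA ?vB // !weight_cs // h1.
have main : forall m l l', (l <= k)%N -> (l' <= k)%N -> (k - l + (k - l') <= m)%N ->
    A (cs n l) (cs n l') = B (cs n l) (cs n l').
  elim=> [|m IH] l1 l2 lk l'k hm; apply: step => // w w1 h1 h2.
    lia.
  apply: IH; lia.
move=> u v.
case: (leqP (weight u) k) => hu; case: (leqP (weight v) k) => hv.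
- rewrite (hA u (cs n (weight u)) v (cs n (weight v))) ?weight_cs ?weight_le //.
  rewrite (hB u (cs n (weight u)) v (cs n (weight v))) ?weight_cs ?weight_le //.
  by apply: (main (k - weight u + (k - weight v))%N).
- by rewrite vA ?vB // hv orbT.
- by rewrite vA ?vB // hu.
- by rewrite vA ?vB // hu.
Qed.

End Bwd.


Section Bwd2.
Variables (R : rcfType) (n : nat).
Local Notation C := R[i].

Lemma ex_superset (A : {set 'I_n}) m : (#|A| <= m)%N -> (m <= n)%N ->
  exists S : {set 'I_n}, A \subset S /\ #|S| = m.
Proof.
move=> h1 h2.
suff : forall d (A : {set 'I_n}), (#|A| + d <= n)%N -> exists S : {set 'I_n}, A \subset S /\ #|S| = (#|A| + d)%N.
  have e : (#|A| + (m - #|A|) = m)%N by lia.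
  by move/(_ (m - #|A|)%N A); rewrite e; apply.
elim=> [|d IH] B hB.
  by exists B; rewrite addn0.
have : (0 < #|~: B|)%N by rewrite cardsCs card_ord setCK; lia.
case/card_gt0P => x; rewrite inE => xB.
have [S [sS cS]] := IH (x |: B) (ltac:(rewrite cardsU1 xB; lia)).
exists S; split.
  by apply: subset_trans sS; apply: subsetUr.
by rewrite cS cardsU1 xB; lia.
Qed.

Lemma symm (sigma rho : op R n) k : (2 <= k)%N -> (k <= n)%N ->
  is_density sigma -> Inv rho ->
  (forall S : {set 'I_n}, #|S| = k -> forall x y, ptrace sigma S x y = ptrace rho S x y) ->
  Inv sigma.
Proof.
move=> k2 kn [herm psd _] hrho hp.
have key : forall i j (u : bits n), i != j -> u i -> ~~ u j ->
    forall y, sigma y (sw i j u) = sigma y u.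
  move=> i j u ij ui uj y.
  have [S [sS cS]] : exists S : {set 'I_n}, [set i; j] \subset S /\ #|S| = k.
    by apply: ex_superset => //; rewrite cards2 ij.
  have iS : i \in S by apply: (subsetP sS); rewrite !inE eqxx.
  have jS : j \in S by apply: (subsetP sS); rewrite !inE eqxx orbT.
  set su := sw i j u.
  pose E := fun z => q sigma (dv R (glue S u z) (glue S su z)) (dv R (glue S u z) (glue S su z)).
  have sumE : \sum_(z : bits n | [forall m in S, ~~ z m]) E z = 0.
    transitivity (ptrace sigma S u u - ptrace sigma S u su - ptrace sigma S su u + ptrace sigma S su su).
      by rewrite /E /ptrace; under eq_bigr => z _ do rewrite q_dv; rewrite big_split !sumrB.
    rewrite !hp // /ptrace -!sumrB -big_split /=; apply: big1 => z _.
    rewrite /su glue_sw //.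
    have e : weight (sw i j (glue S u z)) = weight (glue S u z) by rewrite weight_sw.
    set g := glue S u z.
    have h1 : rho (sw i j g) (sw i j g) = rho g g by apply: hrho.
    have h2 : rho g (sw i j g) = rho g g by apply: hrho.
    have h3 : rho (sw i j g) g = rho g g by apply: hrho.
    rewrite h1 h2 h3; ring.
  pose z0 : bits n := [ffun m => if m \in S then false else u m].
  have z0S : [forall m in S, ~~ z0 m] by apply/forall_inP => m mS; rewrite ffunE mS.
  have gz0 : forall x, glue S x z0 = glue S x u.
    by move=> x; apply/ffunP => m; rewrite !ffunE; case: (m \in S).
  have gu : glue S u u = u by apply/ffunP => m; rewrite ffunE; case: (m \in S).
  have E0 := psumr_eq0P (fun z _ => psd _) sumE z0S.
  rewrite /E !gz0 gu in E0.
  have := kernel herm psd E0 y; rewrite sum_dv.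
  have -> : glue S su u = su.
    apply/ffunP => m; rewrite !ffunE; case: ifP => // mS.
    case: (tpermP i j m) => // e.
      by rewrite e iS in mS.
    by rewrite e jS in mS.
  by move/eqP; rewrite subr_eq0 => /eqP ->.
have sw2 : forall i j y (u : bits n), sigma y (sw i j u) = sigma y u.
  move=> i j y u; case: (eqVneq i j) => [<-|ij].
    by rewrite sw_id.
  case ui: (u i); case uj: (u j).
  - by rewrite sw_id // ui uj.
  - by rewrite key ?ui ?uj.
  - have h := key i j (sw i j u) ij; rewrite swK in h.
    rewrite h //.
      by rewrite /sw ffunE tpermL uj.
    by rewrite /sw ffunE tpermR ui.
  - by rewrite sw_id // ui uj.
move=> u u' v v' e1 e2.
transitivity (sigma u' v).
  apply: (sw_invariant (f := fun w => sigma w v)) => // i j w.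
  by rewrite herm sw2 -herm.
exact: (sw_invariant (f := sigma u')).
Qed.

End Bwd2.


Section Bwd3.
Variables (R : rcfType) (n : nat).
Local Notation C := R[i].

Definition Ucond k (lam : nat -> R) := forall a : nat -> R,
  (forall l, (l <= n)%N -> 0 <= a l) ->
  (forall s, (s <= k)%N ->
     \sum_(l < n.+1) a l * coef R n k s l = \sum_(l < k.+1) lam l * coef R n k s l) ->
  forall l, (l <= n)%N -> a l = (if (l <= k)%N then lam l else 0).

Lemma diag_ge0 (sigma : op R n) x : is_density sigma -> 0 <= sigma x x.
Proof. by case=> _ psd _; rewrite -q_deltas; apply: psd. Qed.

Lemma vanish_diag (sigma : op R n) u : is_density sigma -> sigma u u = 0 ->
  forall y, sigma y u = 0 /\ sigma u y = 0.
Proof.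
case=> herm psd _ h0 y.
have := kernel herm psd (v := delta R u) (ltac:(by rewrite q_deltas)) y.
rewrite (sum_delta (fun x => sigma y x)) => e; split => //.
by rewrite herm e rmorph0.
Qed.

Lemma Cn_neq0 l : (l <= n)%N -> ('C(n, l)%:R : R) != 0.
Proof. by move=> ln; rewrite pnatr_eq0 -lt0n bin_gt0. Qed.

Lemma support (sigma : op R n) k (lam : nat -> R) : (k <= n)%N ->
  is_density sigma -> Inv sigma ->
  (forall x y, ptrace sigma (Sk n k) x y = ptrace (@dicke_mix R n k lam) (Sk n k) x y) ->
  Ucond k lam ->
  forall u v, (k < weight u)%N || (k < weight v)%N -> sigma u v = 0.
Proof.
move=> kn dens hs hp U.
pose G l := sigma (cs n l) (cs n l).
have G0 l : 0 <= G l by apply: diag_ge0.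
have GR l : G l = ((complex.Re (G l))%:C)%C by rewrite RRe_real // ger0_real.
have ReG0 l : 0 <= complex.Re (G l) by rewrite -ler0c -GR.
pose a l := ('C(n, l)%:R : R) * complex.Re (G l).
have a0 l : (l <= n)%N -> 0 <= a l by move=> _; rewrite mulr_ge0 ?ler0n.
have sys : forall s, (s <= k)%N ->
    \sum_(l < n.+1) a l * coef R n k s l = \sum_(l < k.+1) lam l * coef R n k s l.
  move=> s sk.
  have e := hp (cs n s) (cs n s).
  have ws : wS (Sk n k) (cs n s) = s.
    by rewrite wS_out ?weight_cs //; [lia | exact: cs_out].
  have es : ptrace sigma (Sk n k) (cs n s) (cs n s) = \sum_(l < n.+1) (Bn (n - k) s l)%:R * G l.
    transitivity (\sum_(z : bits n | [forall j in Sk n k, ~~ z j]) G (wS (Sk n k) (cs n s) + weight z)%N).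
      apply: eq_bigr => z zS; rewrite -weight_glue //; rewrite /G.
      by apply: hs; rewrite weight_cs // weight_le.
    by rewrite sum_glue card_Sk // ws.
  rewrite es ptrace_mix eqxx card_Sk // ws in e.
  apply: realC_inj; rewrite !rmorph_sum /=.
  transitivity (('C(k, s)%:R : C) * \sum_(l < n.+1) (Bn (n - k) s l)%:R * G l).
    rewrite mulr_sumr; apply: eq_bigr => l _.
    have ln : (l <= n)%N by rewrite -ltnS.
    rewrite [in RHS]GR /a /coef binz_Bn natrM -!(rmorph_nat (real_complex R)) -!rmorphM; congr ((_)%:C)%C.
    by field; apply: Cn_neq0.
  rewrite e (big_ord_widen n.+1 (fun l => ((lam l * coef R n k s l)%:C)%C)) // [RHS]big_mkcond /=.
  rewrite mulr_sumr; apply: eq_bigr => l _.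
  case: ifP => _; last by rewrite !mulr0.
  have ln : (l <= n)%N by rewrite -ltnS.
  rewrite /coef binz_Bn natrM -!(rmorph_nat (real_complex R)) -!rmorphM; congr ((_)%:C)%C.
  by field; apply: Cn_neq0.
have hU := U a a0 sys.
have Gz : forall u, (k < weight u)%N -> sigma u u = 0.
  move=> u ku.
  have ln := weight_le u.
  have := hU _ ln; rewrite leqNgt ku /= /a => /eqP; rewrite mulf_eq0 (negbTE (Cn_neq0 ln)) /= => /eqP h.
  rewrite (hs u (cs n (weight u)) u (cs n (weight u))) ?weight_cs //.
  by rewrite -/(G (weight u)) GR h.
move=> u v /orP [h|h].
  by case: (vanish_diag dens (Gz u h) v).
by case: (vanish_diag dens (Gz v h) u).
Qed.

End Bwd3.


Lemma bin2_R (R : rcfType) (N : nat) : (2 * 'C(N, 2)%:R : R) = N%:R * N.-1%:R.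
Proof.
have := mul_bin_left N 1; rewrite bin1 => h.
have -> : (2 * 'C(N, 2)%:R : R) = (2 * 'C(N, 2))%N%:R by rewrite natrM.
rewrite h natrM mulrC; congr (_ * _); congr (_%:R); lia.
Qed.

Lemma k1_lam1 (R : rcfType) (n : nat) (lam : nat -> R) : (1 < n)%N ->
  (forall l, (l <= 1)%N -> 0 <= lam l) -> Ucond n 1 lam -> lam 1%N = 0.
Proof.
case: n => [|[|m]] // _ lam0 U.
pose a := fun l : nat => if l == 0%N then lam 0%N + lam 1%N / 2
                         else if l == 2%N then lam 1%N / 2 else 0.
have l1 : 0 <= lam 1%N by apply: lam0.
have l0 : 0 <= lam 0%N by apply: lam0.
have a0 : forall l, (l <= m.+2)%N -> 0 <= a l.
  move=> l _; rewrite /a; case: ifP => _; first by rewrite addr_ge0 // divr_ge0.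
  by case: ifP => _ //; rewrite divr_ge0.
have c2 := bin2_R R m.+2; have p2 := bin2_R R m.+1.
have hm : (m.+2%:R : R) != 0 by rewrite pnatr_eq0.
have hm1 : (m.+1%:R : R) != 0 by rewrite pnatr_eq0.
have hc : ('C(m.+2, 2)%:R : R) != 0 by rewrite pnatr_eq0 -lt0n bin_gt0.
have sys : forall s, (s <= 1)%N ->
    \sum_(l < m.+3) a l * coef R m.+2 1 s l = \sum_(l < 2) lam l * coef R m.+2 1 s l.
  move=> s s1.
  rewrite !big_ord_recl big_ord0 big1; last first.
    by move=> i _; rewrite /a /=; rewrite mul0r.
  rewrite /a /= /coef !binz_Bn /Bn.
  have e1 : (m.+2 - 1 = m.+1)%N by lia.
  have ep : ('C(m.+1, 2)%:R : R) = (m.+1%:R * m%:R) / 2.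
    by rewrite -p2 mulrC mulrA mulVf ?mul1r // pnatr_eq0.
  have ec : ('C(m.+2, 2)%:R : R) = (m.+2%:R * m.+1%:R) / 2.
    by rewrite -c2 mulrC mulrA mulVf ?mul1r // pnatr_eq0.
  case: s s1 => [|[|]] // _; rewrite /bump /= e1 ?subn0 ?bin0 ?bin1 ?mul1n ?muln1 ?mul0n /=.
    rewrite ?addn0 ?add1n ep ec -?nat1r; field.
    by rewrite !nat1r !pnatr_eq0.
  rewrite ?addn0 ?add1n ec -?nat1r; field.
  by rewrite !nat1r !pnatr_eq0.
have := U a a0 sys 2%N (ltac:(by [])); rewrite /a /= => /eqP.
by rewrite mulf_eq0 invr_eq0 pnatr_eq0 orbF => /eqP.
Qed.


Lemma bigminn_le (T : finType) (P : pred T) (G : T -> nat) d x0 :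
  P x0 -> (\big[minn/d]_(x | P x) G x <= G x0)%N.
Proof.
move=> Px0; rewrite -big_filter.
have : x0 \in [seq x <- index_enum T | P x] by rewrite mem_filter Px0 mem_index_enum.
elim: [seq x <- index_enum T | P x] => // a s IH; rewrite inE big_cons => /orP [/eqP <-|h].
  exact: geq_minl.
exact: leq_trans (geq_minr _ _) (IH h).
Qed.

Lemma k1_det (R : rcfType) (n : nat) (sigma : op R n) (lam : nat -> R) : (1 < n)%N ->
  is_density sigma -> lam 1%N = 0 -> \sum_(l < 2) lam l = 1 ->
  (forall S : {set 'I_n}, #|S| = 1%N -> forall x y,
      ptrace sigma S x y = ptrace (@dicke_mix R n 1 lam) S x y) ->
  forall x y, sigma x y = @dicke_mix R n 1 lam x y.
Proof.
move=> n1 dens l1 lsum hp.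
have l0 : lam 0%N = 1 by move: lsum; rewrite !big_ord_recl big_ord0 /= l1 !addr0.
have rho_e : forall x y, @dicke_mix R n 1 lam x y =
    if (weight x == 0%N) && (weight y == 0%N) then 1 else 0.
  move=> x y; rewrite mix_entry.
  case Ex: (weight x) => [|[|w]] /=.
  - by rewrite eq_sym; case: (weight y == 0%N); rewrite // bin0 l0 divr1.
  - by case: ifP => // _; rewrite l1 mul0r.
  - by case: ifP => // /andP [].
have pos_u : forall u, (0 < weight u)%N -> sigma u u = 0.
  move=> u; rewrite weight_card => h.
  have [p] : exists p, p \in [set j | u j] by apply/card_gt0P.
  rewrite inE => ui.
  have e := hp [set p] (cards1 p) u u.
  have e0 : ptrace (@dicke_mix R n 1 lam) [set p] u u = 0.
    apply: big1 => z zS; rewrite rho_e.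
    suff : (0 < weight (glue [set p] u z))%N by case: (weight _).
    rewrite weight_card; apply/card_gt0P; exists p; by rewrite !inE ffunE inE eqxx.
  rewrite e0 in e.
  pose z0 : bits n := [ffun m => if m \in [set p] then false else u m].
  have z0S : [forall m in [set p], ~~ z0 m] by apply/forall_inP => m mS; rewrite ffunE mS.
  have gu : glue [set p] u z0 = u.
    by apply/ffunP => m; rewrite !ffunE; case: (m \in [set p]).
  have := psumr_eq0P (fun z _ => diag_ge0 _ dens) e z0S.
  by rewrite gu.
have zw : forall z : bits n, z != [ffun => false] -> (0 < weight z)%N.
  by move=> z nz; rewrite lt0n; apply: contra nz => /eqP /zero_weight ->.
move=> x y.
case: (posnP (weight x)) => hx; last first.
  by rewrite rho_e (gtn_eqF hx); case: (vanish_diag dens (pos_u x hx) y).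
case: (posnP (weight y)) => hy; last first.
  by rewrite rho_e (gtn_eqF hy) andbF; case: (vanish_diag dens (pos_u y hy) x).
rewrite rho_e hx hy /= (zero_weight hx) (zero_weight hy).
case: dens => _ _ tr.
rewrite (bigD1 [ffun => false]) //= big1 ?addr0 // in tr.
by move=> z nz; apply: pos_u; apply: zw.
Qed.

Lemma backward (R : rcfType) (n k : nat) (lam : nat -> R) : (1 <= k)%N -> (k < n)%N ->
  (forall l, (l <= k)%N -> 0 <= lam l) -> \sum_(l < k.+1) lam l = 1 ->
  Ucond n k lam -> (Lnum (@dicke_mix R n k lam) <= k)%N.
Proof.
move=> k1 kn lam0 lam1 U.
set rho := @dicke_mix R n k lam.
pose F := [set S : {set 'I_n} | #|S| == k].
have det : determines rho F.
  have drho := dicke_density (ltnW kn) lam0 lam1.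
  split; first by split.
  move=> sigma [ds hp].
  have hp' : forall S : {set 'I_n}, #|S| = k -> forall x y, ptrace sigma S x y = ptrace rho S x y.
    by move=> S cS; apply: hp; rewrite inE cS.
  case: (leqP k 1) => hk.
    have ek : k = 1%N by lia.
    move: lam0 lam1 U hp' {hp drho}; rewrite /rho ek => lam0 lam1 U hp'.
    apply: k1_det => //; first by lia.
    apply: (@k1_lam1 R n) => //; lia.
  have Is := symm hk (ltnW kn) ds (@Inv_mix R n k lam) hp'.
  have supp := support (ltnW kn) ds Is (hp' _ (card_Sk (ltnW kn))) U.
  apply: (tri (ltnW kn) Is (@Inv_mix R n k lam) supp).
    move=> u v h; rewrite /rho mix_entry; case: eqVneq => //= e.
    by rewrite ltnS leqNgt; move: h; rewrite e orbb => ->.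
  exact: hp' _ (card_Sk (ltnW kn)).
rewrite /Lnum.
have h := @bigminn_le _ (fun F => `[< determines rho F >]) (fun F => (\max_(S in F) #|S|)%N) n F
  (ltac:(by apply/asboolP)).
apply: (leq_trans h).
by apply/bigmax_leqP => S; rewrite inE => /eqP ->.
Qed.


Lemma bigminn_ex (T : finType) (P : pred T) (G : T -> nat) d k :
  (\big[minn/d]_(x | P x) G x <= k)%N -> (k < d)%N -> exists x, P x /\ (G x <= k)%N.
Proof.
move=> h kd; case: (pselect (exists x, P x /\ (G x <= k)%N)) => // H.
suff hk : (k < \big[minn/d]_(x | P x) G x)%N by move: hk; rewrite ltnNge h.
rewrite -big_filter.
have : forall x, x \in [seq x <- index_enum T | P x] -> (k < G x)%N.
  move=> x; rewrite mem_filter => /andP [Px _].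
  by rewrite ltnNge; apply/negP => hx; apply: H; exists x.
elim: [seq x <- index_enum T | P x] => [|a s IH] hs; first by rewrite big_nil.
rewrite big_cons leq_min hs ?inE ?eqxx //= IH // => x xs; apply: hs; by rewrite inE xs orbT.
Qed.

Lemma bigminn_le_id (T : finType) (P : pred T) (G : T -> nat) d :
  (\big[minn/d]_(x | P x) G x <= d)%N.
Proof.
rewrite -big_filter; elim: [seq x <- index_enum T | P x] => [|a s IH]; first by rewrite big_nil.
by rewrite big_cons; exact: leq_trans (geq_minr _ _) IH.
Qed.

Lemma coef_diag (R : rcfType) n s l : (s <= n)%N -> (l <= n)%N ->
  coef R n n s l = if l == s then 1 else 0.
Proof.
move=> sn ln; rewrite /coef binz_Bn subnn /Bn.
case: ifP => sl; case: eqVneq => [e|ne].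
- by rewrite e subnn bin0 muln1 divff // pnatr_eq0 -lt0n bin_gt0.
- have : (0 < l - s)%N by rewrite subn_gt0 ltn_neqAle eq_sym ne sl.
  by case: (l - s)%N => // m _; rewrite bin0n muln0 mul0r.
- by move: sl; rewrite e leqnn.
- by rewrite muln0 mul0r.
Qed.

Lemma sum_coef_diag (R : rcfType) n s (f : nat -> R) : (s <= n)%N ->
  \sum_(l < n.+1) f l * coef R n n s l = f s.
Proof.
move=> sn; have sn' : (s < n.+1)%N by [].
rewrite (bigD1 (Ordinal sn')) //= coef_diag // eqxx mulr1 big1 ?addr0 // => l hl.
rewrite coef_diag //; last by rewrite -ltnS.
case: eqP => [e|_]; last by rewrite mulr0.
move: hl; have -> : l = Ordinal sn' by apply: val_inj.
by rewrite eqxx.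
Qed.

Theorem main_rcf (R : rcfType) (n k : nat) (lam : nat -> R) :
  (1 <= k)%N -> (k <= n)%N ->
  (forall l, (l <= k)%N -> 0 <= lam l) ->
  \sum_(l < k.+1) lam l = 1 ->
  ((@Lnum R n (@dicke_mix R n k lam) <= k)%N <->
   (forall a : nat -> R,
      (forall l, (l <= n)%N -> 0 <= a l) ->
      (forall s, (s <= k)%N ->
         \sum_(l < n.+1) a l * coef R n k s l = \sum_(l < k.+1) lam l * coef R n k s l) ->
      forall l, (l <= n)%N -> a l = (if (l <= k)%N then lam l else 0))).
Proof.
move=> k1 kn lam0 lam1; split.
  move=> hL a a0 hsys l ln.
  case: (ltnP k n) => kn'.
    have [F [det FS]] := bigminn_ex hL kn'.
    move/asboolP: det => det.
    apply: (forward_core kn lam0 lam1 det) => // S SF.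
    exact: leq_trans (leq_bigmax_cond _ SF) FS.
  have ek : k = n by apply/eqP; rewrite eqn_leq kn kn'.
  move: hsys; rewrite ek => hsys.
  have := hsys l ln; rewrite !sum_coef_diag // ln => ->.
  by [].
move=> U.
case: (ltnP k n) => kn'.
  exact: backward.
exact: leq_trans (bigminn_le_id _ _ _) kn'.
Qed.

Unset Implicit Arguments.

Theorem mainTheorem18 (R : realType) (n k : nat) (lam : nat -> R) :
  (1 <= k)%N -> (k <= n)%N ->
  (forall l, (l <= k)%N -> 0 <= lam l) ->
  \sum_(l < k.+1) lam l = 1 ->
  ((@Lnum R n (@dicke_mix R n k lam) <= k)%N <->
   (forall a : nat -> R,
      (forall l, (l <= n)%N -> 0 <= a l) ->
      (forall s, (s <= k)%N ->
         \sum_(l < n.+1) a l * coef R n k s l = \sum_(l < k.+1) lam l * coef R n k s l) ->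
      forall l, (l <= n)%N -> a l = (if (l <= k)%N then lam l else 0))).
Proof. exact: main_rcf. Qed.
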